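(* Let $\mathbf{A}=\mathcal{A}_1\parallel\cdots\parallel\mathcal{A}_n$ be a parallel composition of finite labelled transition systems. Every infinite chain $e_1<e_2<e_3<\cdots$ of events of a branching process of $\mathbf{A}$ contains a subchain $e_{i_1}\ll e_{i_2}\ll e_{i_3}\ll\cdots$ (with $i_1<i_2<\cdots$) in which consecutive events are related by the strong causal relation.
   Context: A labelled transition system (LTS) is $\mathcal{A}=(\Sigma,S,T,\lambda,s^0)$ with finite actions $\Sigma$, finite states $S$, $T\subseteq S\times S$, $\lambda:T\to\Sigma$, initial $s^0$. For $\mathcal{A}_j=(\Sigma_j,S_j,T_j,\lambda_j,s^0_j)$, the parallel composition has global states in $S_1\times\cdots\times S_n$, initial state $(s^0_1,\dots,s^0_n)$, and global transitions $\mathbf{t}=(t_1,\dots,t_n)\neq(\star,\dots,\star)$ with label $a$, where $t_j$ is an $a$-transition of $\mathcal{A}_j$ if $a\in\Sigma_j$ and $t_j=\star$ otherwise ($\mathcal{A}_j$ participates iff $t_j\ne\star$); ${}^\bullet\mathbf{t}$ / $\mathbf{t}^\bullet$ are the sets of source / target states of the $t_j\neq\star$. Branching processes of $\mathbf{A}$ are Petri nets with conditions labelled by local states and events labelled by global transitions, defined inductively: the net with conditions $b^0_1,\dots,b^0_n$ labelled $s^0_1,\dots,s^0_n$ and no events is one; if a reachable marking of a branching process contains a set $M$ of conditions labelled exactly by ${}^\bullet\mathbf{t}$ and there is no event labelled $\mathbf{t}$ with input set $M$, adding an event $e$ labelled $\mathbf{t}$ with inputs $M$ and a fresh output condition for each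 state of $\mathbf{t}^\bullet$ (labelled by it) gives a branching process; arbitrary branching processes are (countable) unions of such. For nodes $x,y$, $x<y$ means there is a nonempty directed arc path from $x$ to $y$. For an event $e$, $[e]=\{e':e'\le e\}$ and $M(e)$ is the marking (set of conditions) reached by firing exactly the events of $[e]$ from the initial marking. Event $e'$ is a strong cause of event $e$, written $e'\ll e$, if $e'<e$ and $b'<b$ for every $b\in M(e)\setminus M(e')$ and every $b'\in M(e')\setminus M(e)$. *)

(* Defs.v *)
From mathcomp Require Import all_boot.
From Stdlib Require Import Relations.
Set Implicit Arguments. Unset Strict Implicit. Unset Printing Implicit Defensive.

(** * Labelled transition systems  A = (Sigma, S, T, lambda, s0)
    Actions of all components are drawn from a common finite type [Act];
    [sig] is the finite action set Sigma of the LTS. *)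
Record LTS (Act : finType) := {
  st : finType;
  sig : {set Act};
  tr : {set st * st};
  lab : st * st -> Act;                           (* lambda (relevant on T) *)
  lab_in : forall t, t \in tr -> lab t \in sig;
  init : st
}.

Section BP.
Variables (Act : finType) (n : nat) (A : 'I_n -> LTS Act).

(** A (candidate) global transition with label [a]: for each component j,
    [Some t_j] (an a-transition of A_j) or [None] (standing for the star). *)
Definition gtr := forall j : 'I_n, option (st (A j) * st (A j)).

Definition is_gtrans (a : Act) (t : gtr) : Prop :=
  (exists j, t j <> None) /\
  forall j, if a \in sig (A j)
            then exists tj, t j = Some tj /\ tj \in tr (A j) /\ lab tj = a
            else t j = None.

(** Branching processes are represented by the sequence of extension steps
    that builds them: step k either adds nothing ([None]) or adds event
    number k ([Some x]).  Nodes are named canonically: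
    - condition [(None, j)] : the initial condition b0_j (labelled s0_j);
    - condition [(Some k, j)] : the output condition of event k for the
      participating component j (labelled by the target state of t_j);
    - event k.
    For an event [x], [ev_pre x j] names the input condition of component j
    (only meaningful when j participates): input condition [(ev_pre x j, j)]. *)
Record event := {
  ev_act : Act;
  ev_tr : gtr;
  ev_pre : 'I_n -> option nat
}.

Definition cond := (option nat * 'I_n)%type.
Definition node := (cond + nat)%type.

Definition init_mark (c : cond) : Prop := c.1 = None.

Section Net.
Variable X : nat -> option event.

Definition is_event (k : nat) : Prop := exists x, X k = Some x.

Definition pre (k : nat) (c : cond) : Prop :=
  exists x, X k = Some x /\ ev_tr x c.2 <> None /\ ev_pre x c.2 = c.1.

Definition post (k : nat) (c : cond) : Prop :=
  c.1 = Some k /\ exists x, X k = Some x /\ ev_tr x c.2 <> None.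

Inductive fires : (cond -> Prop) -> seq nat -> (cond -> Prop) -> Prop :=
| fires_nil M : fires M [::] M
| fires_cons M k s M' :
    is_event k -> (forall c, pre k c -> M c) ->
    fires (fun c => (M c /\ ~ pre k c) \/ post k c) s M' ->
    fires M (k :: s) M'.

Definition reachable_before (k : nat) (M : cond -> Prop) : Prop :=
  exists s, (forall k', k' \in s -> k' < k) /\ fires init_mark s M.

Definition valid_step (k : nat) (x : event) : Prop :=
  [/\ is_gtrans (ev_act x) (ev_tr x),
      (* the input conditions are labelled exactly by the source states *)
      (forall j t, ev_tr x j = Some t ->
         match ev_pre x j with
         | None => t.1 = init (A j)
         | Some k' => k' < k /\ exists x' t', X k' = Some x' /\
                        ev_tr x' j = Some t' /\ t'.2 = t.1
         end),
      (exists M, reachable_before k M /\ forall c, pre k c -> M c) &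
      (forall k' x', k' < k -> X k' = Some x' ->
         ~ [/\ ev_act x' = ev_act x, (forall j, ev_tr x' j = ev_tr x j) &
               (forall c, pre k' c <-> pre k c)])].

Definition is_branching_process : Prop :=
  forall k x, X k = Some x -> valid_step k x.

Definition arc (u v : node) : Prop :=
  match u, v with
  | inl c, inr k => pre k c
  | inr k, inl c => post k c
  | _, _ => False
  end.

Definition node_lt : node -> node -> Prop := clos_trans node arc.

Definition ev_lt (e' e : nat) : Prop := node_lt (inr e') (inr e).
Definition ev_le (e' e : nat) : Prop := e' = e \/ ev_lt e' e.

Definition marking_of (e : nat) (M : cond -> Prop) : Prop :=
  exists s, uniq s /\ (forall k, k \in s <-> ev_le k e) /\ fires init_mark s M.

Definition strong_cause (e' e : nat) : Prop :=
  ev_lt e' e /\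
  forall M M', marking_of e M -> marking_of e' M' ->
    forall b b', M b -> ~ M' b -> M' b' -> ~ M b' ->
      node_lt (inl b') (inl b).

End Net.
End BP.

(* Main.v *)
Require Import Defs.
From mathcomp Require Import all_boot.
From Stdlib Require Import Relations Classical ClassicalEpsilon.
Set Implicit Arguments. Unset Strict Implicit. Unset Printing Implicit Defensive.

Section Pf.
Variables (Act : finType) (n : nat) (A : 'I_n -> LTS Act) (X : nat -> option (event A)).
Hypothesis HBP : is_branching_process X.

Definition part (k : nat) (j : 'I_n) := exists x, X k = Some x /\ ev_tr x j <> None.

Definition rank (u : node n) : nat :=
  match u with
  | inl c => match c.1 with None => 0 | Some k => k.*2.+2 end
  | inr k => k.*2.+1
  end.

Lemma pre_src k c : pre X k c ->
  c.1 = None \/ exists q, c.1 = Some q /\ q < k /\ post X q c.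
Proof.
case: c => [o j] /=.
case=> x [Xk [Ht Hp]] /=; simpl in Ht, Hp.
move: (HBP Xk); rewrite /valid_step => -[_ H2 _ _].
case Et: (ev_tr x j) Ht => [t|] // _.
have := H2 _ _ Et; rewrite Hp; case: o {Hp} => [q|]; last by left.
move=> [qk [x' [t' [Xq [Et' _]]]]]; right; exists q; split=> //; split=> //.
split=> //; exists x'; split=> //=; by rewrite Et'.
Qed.

Lemma post_fst k c : post X k c -> c.1 = Some k.
Proof. by case. Qed.

Lemma pre_part k c : pre X k c -> part k c.2.
Proof. by case=> x [? [? ?]]; exists x. Qed.

Lemma post_part k c : post X k c -> part k c.2.
Proof. by case=> _ [x [? ?]]; exists x. Qed.

Lemma part_pre k j : part k j -> exists c, pre X k c /\ c.2 = j.
Proof. case=> x [Xk Ht]; exists (ev_pre x j, j); split=> //; by exists x. Qed.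

Lemma part_post k j : part k j -> post X k (Some k, j).
Proof. case=> x [Xk Ht]; split=> //; by exists x. Qed.

Lemma pre_uniq k c c' : pre X k c -> pre X k c' -> c.2 = c'.2 -> c = c'.
Proof.
case=> x [Xk [_ H1]] [x' [Xk' [_ H2]]] E.
rewrite Xk in Xk'; case: Xk' => <- in H2.
case: c c' E H1 H2 => [a b] [a' b'] /= <- <- <-; done.
Qed.

Lemma arc_rank u v : Defs.arc X u v -> rank u < rank v.
Proof.
case: u => [c|k]; case: v => [c'|k'] //=.
- move=> /pre_src [->|[q [-> [lt _]]]] //.
  by rewrite -doubleS ltnS leq_double.
- by move=> /post_fst ->.
Qed.

Lemma lt_rank u v : node_lt X u v -> rank u < rank v.
Proof.
elim=> [x y /arc_rank //|x y z _ H1 _ H2]; exact: ltn_trans H1 H2.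
Qed.

Lemma node_lt_irr u : ~ node_lt X u u.
Proof. by move=> /lt_rank; rewrite ltnn. Qed.

Lemma pre_lt k c : pre X k c -> node_lt X (inl c) (inr k).
Proof. by move=> H; apply: t_step. Qed.
Lemma post_lt k c : post X k c -> node_lt X (inr k) (inl c).
Proof. by move=> H; apply: t_step. Qed.

Lemma nlt_trans u v w : node_lt X u v -> node_lt X v w -> node_lt X u w.
Proof. by move=> H1 H2; apply: t_trans H1 H2. Qed.

Lemma ev_le_trans a b c : ev_le X a b -> ev_le X b c -> ev_le X a c.
Proof.
move=> [->|H1] // [<-|H2]; [by right| right; exact: nlt_trans H1 H2].
Qed.

Lemma ev_le_lt a b c : ev_le X a b -> ev_lt X b c -> ev_lt X a c.
Proof. by move=> [->|H1] // H2; exact: nlt_trans H1 H2. Qed.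

Lemma ev_lt_le a b c : ev_lt X a b -> ev_le X b c -> ev_lt X a c.
Proof. by move=> H1 [<-|H2] //; exact: nlt_trans H1 H2. Qed.

Lemma post_pre_lt g h c : post X g c -> pre X h c -> ev_lt X g h.
Proof. move=> H1 H2; exact: nlt_trans (post_lt H1) (pre_lt H2). Qed.


Definition Inv (P : seq nat) (M : cond n -> Prop) :=
 [/\ (forall c g, M c -> c.1 = Some g -> g \in P),
     (forall j, exists c, M c /\ c.2 = j),
     (forall c c', M c -> M c' -> c.2 = c'.2 -> c = c') &
     (forall c f0, M c -> f0 \in P -> part f0 c.2 ->
        exists g, c.1 = Some g /\ ev_le X f0 g)].

Lemma pair_eq (c c' : cond n) : c.1 = c'.1 -> c.2 = c'.2 -> c = c'.
Proof. by case: c c' => [a b] [a' b'] /= -> ->. Qed.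

Lemma fires_inv M s M' : fires X M s M' -> forall P, uniq (P ++ s) -> Inv P M ->
  [/\ Inv (P ++ s) M',
      (forall c, M' c <-> (M c \/ exists k, k \in s /\ post X k c) /\
                          ~ exists k, k \in s /\ pre X k c),
      (forall p f0 j, p \in s -> f0 \in P -> part f0 j -> part p j -> ev_le X f0 p) &
      (forall h c p, h \in s -> pre X h c -> p \in P ++ s -> part p c.2 ->
         ev_le X h p \/ exists q, c.1 = Some q /\ ev_le X p q)].
Proof.
elim=> {M s M'} [M|M k s M' Hev HM Hf IH] P.
  rewrite cats0 => _ HI; split=> //.
  - move=> c; split; first by move=> H; split; [left|case=> ? []].
    by case=> [[//|[? [H _]]] _]; rewrite in_nil in H.
move=> Hu [Ia Ib Ib' Ic].
have ordk : forall f0 j, f0 \in P -> part f0 j -> part k j -> ev_le X f0 k.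
  move=> f0 j fP pf pk; have [c [pc c2]] := part_pre pk.
  have := Ic c f0 (HM _ pc) fP; rewrite c2 => /(_ pf) [g [cg le]].
  have [c1|[q [cq [_ pq]]]] := pre_src pc; first by rewrite c1 in cg.
  rewrite cg in cq; case: cq => <- in pq.
  apply: ev_le_trans le _; right; exact: post_pre_lt pq pc.
have kP : k \notin P.
  by move: Hu; rewrite cat_uniq => /and3P [_ /hasPn H _]; apply: H; rewrite inE eqxx.
set M1 := fun c => (M c /\ ~ pre X k c) \/ post X k c.
have I1 : Inv (P ++ [:: k]) M1.
  split.
  - move=> c g [[Mc _]|pc] cg; rewrite mem_cat; first by rewrite (Ia _ _ Mc cg).
    by rewrite (post_fst pc) in cg; case: cg => ->; rewrite mem_seq1 eqxx orbT.
  - move=> j; case: (classic (part k j)) => pk.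
      by exists (Some k, j); split=> //; right; exact: part_post.
    have [c [Mc c2]] := Ib j; exists c; split=> //; left; split=> // /pre_part.
    by rewrite c2.
  - have mix : forall c c', M c -> ~ pre X k c -> post X k c' -> c.2 = c'.2 -> False.
      move=> c c' Mc npc pc' E.
      have [c'' [pc'' c2]] := part_pre (post_part pc').
      apply: npc; rewrite (Ib' c c'' Mc (HM _ pc'')) //; by rewrite c2.
    move=> c c' [[Mc npc]|pc] [[Mc' npc']|pc'] E.
    + exact: Ib'.
    + by case: (mix _ _ Mc npc pc' E).
    + by case: (mix _ _ Mc' npc' pc (esym E)).
    + by apply: pair_eq => //; rewrite (post_fst pc) (post_fst pc').
  - move=> c f0 [[Mc npc]|pc]; rewrite mem_cat mem_seq1 => /orP fk pf.
    + case: fk => [fP|/eqP fk]; first exact: Ic.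
      subst f0; have [c'' [pc'' c2]] := part_pre pf.
      by case: npc; rewrite (Ib' c c'' Mc (HM _ pc'')) // c2.
    + exists k; split; first exact: post_fst.
      case: fk => [fP|/eqP ->]; last by left.
      apply: ordk fP pf (post_part pc).
have Hu' : uniq ((P ++ [:: k]) ++ s) by rewrite -catA.
have [I' Ch Ord LC] := IH _ Hu' I1.
split.
- by rewrite -catA in I'.
- move=> c; rewrite Ch; split.
  + move=> [H1 H2]; split.
      case: H1 => [[[Mc _]|pc]|[k' [ks pc]]]; [by left|right; exists k; split=> //; exact: mem_head|].
      by right; exists k'; split=> //; rewrite inE ks orbT.
    move=> [k' [ks pc]]; move: ks; rewrite inE => /orP [/eqP Ek|ks]; last by apply: H2; exists k'.
    subst k'; case: H1 => [[[_ npc]|pc']|[k'' [ks pc']]]; first by [].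
    * have := pre_src pc; rewrite (post_fst pc'); case=> [//|[q [[<-] [lt _]]]].
      by rewrite ltnn in lt.
    * have := Ia _ _ (HM _ pc) (post_fst pc') => kP'.
      move: Hu; rewrite cat_uniq => /and3P [_ /hasPn H _].
      by move: (H k''); rewrite inE ks orbT kP' => /(_ isT).
  + move=> [H1 H2]; split.
      case: H1 => [Mc|[k' [ks pc]]].
        left; left; split=> // pc; apply: H2; exists k; split=> //; exact: mem_head.
      move: ks; rewrite inE => /orP [/eqP Ek|ks]; first by subst k'; left; right.
      by right; exists k'.
    move=> [k' [ks pc]]; apply: H2; exists k'; split=> //; by rewrite inE ks orbT.
- move=> p f0 j; rewrite inE => /orP [/eqP ->|ps] fP pf pp; first exact: ordk fP pf pp.
  by apply: Ord ps _ pf pp; rewrite mem_cat fP.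
- move=> h c p; rewrite inE => /orP [/eqP ->|hs] pc; last first.
    by rewrite -cat1s catA => pP; apply: LC.
  rewrite mem_cat inE => /orP [pP|/orP [/eqP ->|ps]] pp; first by right; apply: Ic pP pp; apply: HM.
    by left; left.
  left; apply: Ord ps _ (pre_part pc) pp; by rewrite mem_cat mem_seq1 eqxx orbT.
Qed.

Definition Mk e (c : cond n) := (c.1 = None \/ exists k, ev_le X k e /\ post X k c) /\
   ~ exists k, ev_le X k e /\ pre X k c.

Definition GoodE e :=
 [/\ (forall j, exists c, Mk e c /\ c.2 = j),
     (forall c c', Mk e c -> Mk e c' -> c.2 = c'.2 -> c = c'),
     (forall c f0, Mk e c -> ev_le X f0 e -> part f0 c.2 ->
        exists g, c.1 = Some g /\ ev_le X f0 g) &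
     (forall h c p, ev_le X h e -> pre X h c -> ev_le X p e -> part p c.2 ->
        ev_le X h p \/ exists q, c.1 = Some q /\ ev_le X p q)].

Lemma marking_good e M : marking_of X e M -> GoodE e /\ forall c, M c <-> Mk e c.
Proof.
case=> s [us [Hs Hf]].
have I0 : Inv [::] (@init_mark n).
  split=> //.
  - by move=> c g; rewrite /init_mark => ->.
  - by move=> j; exists (None, j).
  - by move=> c c'; rewrite /init_mark => E1 E2 E3; apply: pair_eq => //; rewrite E1 E2.
have [[_ Ib Ib' Ic] Ch _ LC] := fires_inv Hf (P:=[::]) us I0.
have EM : forall c, M c <-> Mk e c.
  move=> c; rewrite Ch /Mk /init_mark; split.
  - case=> [H1 H2]; split.
      case: H1 => [->|[k [ks pk]]]; [by left|right; exists k; split=> //; exact/Hs].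
    by case=> k [le pk]; apply: H2; exists k; split=> //; exact/Hs.
  - case=> [H1 H2]; split.
      case: H1 => [->|[k [ks pk]]]; [by left|right; exists k; split=> //; exact/Hs].
    by case=> k [le pk]; apply: H2; exists k; split=> //; exact/Hs.
split=> //; split.
- by move=> j; have [c [Mc c2]] := Ib j; exists c; split=> //; exact/EM.
- by move=> c c' /EM Mc /EM Mc'; apply: Ib'.
- by move=> c f0 /EM Mc /Hs fs; apply: Ic.
- by move=> h c p /Hs hs pc /Hs ps; apply: LC.
Qed.

Lemma cross (F : node n -> Prop) u v : node_lt X u v -> ~ F u -> F v ->
  exists x y, Defs.arc X x y /\ ~ F x /\ F y /\ (x = u \/ node_lt X u x) /\
              (y = v \/ node_lt X y v).
Proof.
elim=> {u v} [u v H nFu Fv|u w v H1 IH1 H2 IH2 nFu Fv].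
  by exists u, v; do 4 (split=> //; try by left).
case: (classic (F w)) => Fw.
  have [x [y [a [nx [Fy [xu yw]]]]]] := IH1 nFu Fw.
  exists x, y; do 4 (split=> //); right; case: yw => [->//|yw]; exact: nlt_trans yw H2.
have [x [y [a [nx [Fy [xw yv]]]]]] := IH2 Fw Fv.
exists x, y; do 4 (split=> //); right; case: xw => [->//|xw]; exact: nlt_trans H1 xw.
Qed.

Lemma lt_into_cond u c : node_lt X u (inl c) ->
  exists k, post X k c /\ (u = inr k \/ node_lt X u (inr k)).
Proof.
move E: (inl c) => v H; elim: H c E => {u v} [u v a|u w v H1 _ H2 IH2] c E.
  subst v; case: u a => [c'|k] //= a; by exists k; split=> //; left.
have [k [pk wk]] := IH2 _ E; exists k; split=> //; right.
case: wk => [<-//|wk]; exact: nlt_trans H1 wk.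
Qed.

Lemma fin_bound (P : 'I_n -> nat -> Prop) : (forall l, exists N, P l N) ->
  (forall l N N', N <= N' -> P l N -> P l N') -> exists N, forall l, P l N.
Proof.
move=> Hex Hmono.
suff [N HN] : exists N, forall l, l \in enum 'I_n -> P l N.
  by exists N => l; apply: HN; rewrite mem_enum.
elim: (enum 'I_n) => [|l s [N2 IH]]; first by exists 0.
have [N1 H1] := Hex l; exists (maxn N1 N2) => l'; rewrite inE => /orP [/eqP ->|ls].
  by apply: Hmono H1; rewrite leq_maxl.
by apply: Hmono (IH _ ls); rewrite leq_maxr.
Qed.

Lemma assemble (SC : nat -> nat -> Prop) :
  (exists N, forall i, N <= i -> exists i', i < i' /\ SC i i') ->
  exists g : nat -> nat, (forall m, g m < g m.+1) /\ forall m, SC (g m) (g m.+1).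
Proof.
case=> N H.
have H' : forall i, exists i', N <= i -> i < i' /\ SC i i'.
  move=> i; case: (leqP N i) => Ni.
    by have [i' Hi] := H i Ni; exists i'.
  by exists 0.
pose h i := proj1_sig (constructive_indefinite_description _ (H' i)).
have Hh : forall i, N <= i -> i < h i /\ SC i (h i).
  move=> i; rewrite /h; case: (constructive_indefinite_description _ _) => //.
pose g m := iter m h N.
have gN : forall m, N <= g m.
  rewrite /g; elim=> [|m IH] //=; exact: leq_trans IH (ltnW (Hh _ IH).1).
by exists g; split=> m; [exact: (Hh _ (gN m)).1|exact: (Hh _ (gN m)).2].
Qed.

Section Main.
Variable f : nat -> nat.
Hypothesis Hch : forall i, ev_lt X (f i) (f i.+1).
Hypothesis Hgood : forall m, GoodE (f m).

Lemma chain_lt i j : i < j -> ev_lt X (f i) (f j).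
Proof.
elim: j => [//|j IH]; rewrite ltnS leq_eqVlt => /orP [/eqP ->//|ij].
exact: nlt_trans (IH ij) (Hch j).
Qed.

Lemma chain_le i j : i <= j -> ev_le X (f i) (f j).
Proof. by rewrite leq_eqVlt => /orP [/eqP ->|/chain_lt]; [left|right]. Qed.

Lemma cfg_mono k i j : ev_le X k (f i) -> i <= j -> ev_le X k (f j).
Proof. by move=> H ij; apply: ev_le_trans H (chain_le ij). Qed.

Lemma Mk_prod e c g : Mk e c -> c.1 = Some g -> post X g c /\ ev_le X g e.
Proof.
case=> [[->//|[k [le pk]]] _] cg; rewrite (post_fst pk) in cg; by case: cg => <-.
Qed.

Lemma Mk_persist i a b c : i <= a -> a <= b -> Mk (f i) c -> Mk (f b) c -> Mk (f a) c.
Proof.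
move=> ia ab [H1 _] [_ H2]; split.
  case: H1 => [->|[k [le pk]]]; [by left|right; exists k; split=> //; exact: cfg_mono le ia].
by case=> k [le pk]; apply: H2; exists k; split=> //; exact: cfg_mono le ab.
Qed.

Lemma consumed i j c : i <= j -> Mk (f i) c -> ~ Mk (f j) c ->
  exists h, ev_le X h (f j) /\ pre X h c.
Proof.
move=> ij [H1 _] nM; apply: NNPP => nE; apply: nM; split=> //.
case: H1 => [->|[k [le pk]]]; [by left|right; exists k; split=> //; exact: cfg_mono le ij].
Qed.

Lemma step1 i j c : i <= j -> Mk (f j) c -> ~ Mk (f i) c ->
  exists g, c.1 = Some g /\ post X g c /\ ev_le X g (f j) /\ ~ ev_le X g (f i).
Proof.
move=> ij [H1 H2] nM.
case: H1 => [c1|[g [le pg]]].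
  by case: nM; split; [left|case=> k [le pk]; apply: H2; exists k; split=> //; exact: cfg_mono le ij].
exists g; split; first exact: post_fst pg. do 2 (split=> //).
move=> gi; apply: nM; split; first by right; exists g.
by case=> k [le2 pk]; apply: H2; exists k; split=> //; exact: cfg_mono le2 ij.
Qed.

Definition chg (l : 'I_n) a b := exists c, Mk (f a) c /\ c.2 = l /\ ~ Mk (f b) c.
Definition infc l := forall i, exists a b, i <= a /\ a <= b /\ chg l a b.

Lemma chg_back l i a b : i <= a -> a <= b -> chg l a b -> chg l i b.
Proof.
move=> ia ab [ca [Ma [ca2 nMb]]].
have [_ Ib' _ _] := Hgood a.
have [_ [Ib _ _ _]] := (I, Hgood i).
have [c0 [M0 c02]] := Ib l; exists c0; split=> //; split=> // Mb.
have Ma0 := Mk_persist ia ab M0 Mb.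
by apply: nMb; rewrite -(Ib' _ _ Ma0 Ma) // c02 ca2.
Qed.

Lemma main_good : exists N, forall i, N <= i ->
  exists i', i < i' /\ strong_cause X (f i) (f i').
Proof.
pose P1 l N := infc l \/ (forall a b, N <= a -> a <= b -> ~ chg l a b).
have [N HN] : exists N, forall l, P1 l N.
  apply: fin_bound.
    move=> l; case: (classic (infc l)) => Hi; first by exists 0; left.
    have [i Hi'] := not_all_ex_not _ _ Hi; exists i; right => a b ia ab ch.
    by apply: Hi'; exists a, b.
  move=> l N1 N2 le [H|H]; [by left|right => a b ia ab; apply: H ab].
  exact: leq_trans le ia.
exists N => i Ni.
pose P2 l K := infc l -> forall c, Mk (f i) c -> c.2 = l ->
  exists h, ev_le X h (f K) /\ pre X h c.
have [K0 HK0] : exists K, forall l, P2 l K.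
  apply: fin_bound.
    move=> l; case: (classic (infc l)) => Hi; last by exists 0.
    have [a [b [ia [ab ch]]]] := Hi i.
    have [c0 [M0 [c02 nM0]]] := chg_back ia ab ch.
    have [h [hle pc]] := consumed (leq_trans ia ab) M0 nM0.
    exists b => _ c Mc c2; exists h; split=> //.
    have [_ Ib' _ _] := Hgood i; by rewrite (Ib' _ _ Mc M0) // c2 c02.
  move=> l N1 N2 le H Hi c Mc c2; have [h [hle pc]] := H Hi c Mc c2.
  by exists h; split=> //; exact: cfg_mono hle le.
pose K := K0 + i.+1.
have HK : forall l, P2 l K.
  move=> l Hi c Mc c2; have [h [hle pc]] := HK0 l Hi c Mc c2.
  by exists h; split=> //; apply: cfg_mono hle _; rewrite leq_addr.
have iK : i < K by rewrite /K addnS ltnS leq_addl.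
pose merged m (l : 'I_n) := exists c g, Mk (f m) c /\ c.2 = l /\ c.1 = Some g /\
  ev_le X (f K) g.
have mer_mono : forall m m' l, m <= m' -> merged m l -> merged m' l.
  move=> m m' l mm [c [g [Mc [c2 [cg le]]]]].
  have [Ib Ib' Ic _] := Hgood m'.
  have [c' [Mc' c'2]] := Ib l.
  case: (classic (Mk (f m) c')) => Hm.
    have [_ Ib'm _ _] := Hgood m.
    have E : c = c' by apply: Ib'm => //; rewrite c2 c'2.
    by subst c'; exists c, g.
  have nMc : ~ Mk (f m') c.
    by move=> Mc2; apply: Hm; rewrite -(Ib' _ _ Mc2 Mc') // c2 c'2.
  have [h [hle pc]] := consumed mm Mc nMc.
  have pc2 : part h c'.2 by rewrite c'2 -c2; exact: pre_part pc.
  have [g' [cg' le']] := Ic c' h Mc' hle pc2.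
  exists c', g'; do 3 (split=> //).
  have [pg _] := Mk_prod Mc cg.
  apply: ev_le_trans le _; apply: ev_le_trans _ le'; right; exact: post_pre_lt pg pc.
pose P3 l M := (exists m, merged m l) -> merged M l.
have [M0 HM0] : exists M, forall l, P3 l M.
  apply: fin_bound.
    move=> l; case: (classic (exists m, merged m l)) => [[m Hm]|Hn]; last by exists 0.
    by exists m.
  by move=> l N1 N2 le H Hm; apply: mer_mono le (H Hm).
pose m1 := M0 + K.
have Hm1 : forall l, (exists m, merged m l) -> merged m1 l.
  by move=> l Hm; apply: mer_mono (HM0 l Hm); rewrite leq_addr.
have Km1 : K <= m1 by rewrite leq_addl.
pose F (x : node n) := x = inr (f K) \/ node_lt X (inr (f K)) x.
have FevE : forall k, F (inr k) -> ev_le X (f K) k.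
  by move=> k [[->]|H]; [left|right].
have C : forall m l c', m1 <= m -> Mk (f m) c' -> c'.2 = l -> ~ merged m1 l ->
    Mk (f m1) c'.
  move=> m l c' mm Mc' c'2 nmer; apply: NNPP => nM.
  have [g' [cg' [pg' [g'm ng'm1]]]] := step1 mm Mc' nM.
  have notF : ~ ev_le X (f K) g'.
    by move=> H; apply: nmer; apply: Hm1; exists m, c', g'.
  have Km := leq_trans Km1 mm.
  have ltg : node_lt X (inr g') (inr (f m)).
    case: g'm => [E|//]; case: notF; rewrite E; exact: chain_le.
  have nFg : ~ F (inr g') by move=> /FevE.
  have Ffm : F (inr (f m)) by case: (chain_le Km) => [E|H]; [left; rewrite E|right].
  have [x [y [a [nFx [Fy [xu yv]]]]]] := cross ltg nFg Ffm.
  case: x y a nFx Fy xu yv => [c|k] [c2|h] //= a nFx Fy xu yv; last first.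
    apply: nFx; case: Fy => [//|/lt_into_cond [k' [pk' Hk']]].
    have Ek : k' = k by have := post_fst pk'; rewrite (post_fst a) => -[].
    by subst k'; case: Hk' => [[E]|H]; [left; rewrite E|right].
  case: xu => [//|g'c].
  have hm : ev_le X h (f m) by case: yv => [[->]|H]; [left|right].
  have Kh := FevE _ Fy.
  have [Ib Ib' Ic LC] := Hgood m.
  have [c'' [Mc'' c''2]] := Ib c.2.
  have pc2 : part h c''.2 by rewrite c''2; exact: pre_part a.
  have [g'' [cg'' hg'']] := Ic c'' h Mc'' hm pc2.
  have [c1 [p [Mc1 [c12 [c1p Kp]]]]] : merged m1 c.2.
    by apply: Hm1; exists m, c'', g''; do 3 (split=> //); exact: ev_le_trans Kh hg''.
  have [pp pm1] := Mk_prod Mc1 c1p.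
  have pm : ev_le X p (f m) := cfg_mono pm1 mm.
  have ppart : part p c.2 by rewrite -c12; exact: post_part pp.
  case: (LC h c p hm a pm ppart) => [hp|[q [cq pq]]].
    apply: ng'm1; right; apply: ev_lt_le _ (ev_le_trans hp pm1).
    exact: nlt_trans g'c (pre_lt a).
  apply: nFx; right.
  have [c1n|[q' [cq' [_ pq']]]] := pre_src a; first by rewrite c1n in cq.
  rewrite cq in cq'; case: cq' => Eq; subst q'.
  case: (ev_le_trans Kp pq) => [->|H]; first exact: post_lt.
  exact: nlt_trans H (post_lt pq').
exists m1; split; first exact: leq_trans iK Km1.
split; first exact: chain_lt (leq_trans iK Km1).
move=> M M' HM HM' b b' Mb nM'b M'b' nMb'.
have [_ EM] := marking_good HM; have [_ EM'] := marking_good HM'.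
move/EM: Mb => Mb; move/EM': M'b' => M'b'.
have nMib : ~ Mk (f i) b by move=> /EM'.
have nMb'1 : ~ Mk (f m1) b' by move=> /EM.
have im1 : i <= m1 by apply: ltnW; exact: leq_trans iK Km1.
have getinf : forall l, chg l i m1 -> infc l.
  move=> l ch; case: (HN l) => [//|H]; by case: (H i m1 Ni im1).
have [Ibi Ibi' _ _] := Hgood i.
have [Ibm Ibm' _ _] := Hgood m1.
have [c0 [M0c c02]] := Ibi b.2.
have chl : chg b.2 i m1.
  exists c0; split=> //; split=> // Mc0; apply: nMib.
  by rewrite -(Ibm' _ _ Mc0 Mb).
have [a [bb [ma [abb chab]]]] := getinf _ chl m1.
have [c1 [Mc1 [c12 nMc1]]] := chg_back ma abb chab.
have mer : merged m1 b.2.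
  apply: NNPP => nmer.
  have [Ibb _ _ _] := Hgood bb.
  have [c'' [Mc'' c''2]] := Ibb b.2.
  have := C bb _ c'' (leq_trans ma abb) Mc'' c''2 nmer => Mm.
  by apply: nMc1; rewrite -(Ibm' _ _ Mm Mc1) // c''2 c12.
have [cm [g [Mcm [cm2 [cmg Kg]]]]] := mer.
have E : cm = b by apply: Ibm'.
subst cm.
have [pg _] := Mk_prod Mcm cmg.
have chl' : chg b'.2 i m1 by exists b'.
have [h [hK pb']] := HK _ (getinf _ chl') b' M'b' erefl.
apply: nlt_trans (pre_lt pb') _.
case: (ev_le_trans hK Kg) => [->|H]; first exact: post_lt pg.
exact: nlt_trans H (post_lt pg).
Qed.

End Main.

End Pf.

Theorem lemma1 (Act : finType) (n : nat) (A : 'I_n -> LTS Act)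
    (X : nat -> option (event A)) :
  is_branching_process X ->
  forall f : nat -> nat,
    (forall i, is_event X (f i)) ->
    (forall i, ev_lt X (f i) (f i.+1)) ->
    exists g : nat -> nat,
      (forall m, g m < g m.+1) /\
      (forall m, strong_cause X (f (g m)) (f (g m.+1))).
Proof.
move=> HBP f Hev Hch.
case: (classic (exists N0, forall m, N0 <= m -> exists M, marking_of X (f m) M))
  => [[N0 HN0]|Hn].
  pose f' m := f (m + N0).
  have Hch' : forall i, ev_lt X (f' i) (f' i.+1) by move=> i; rewrite /f' addSn.
  have Hg' : forall m, GoodE X (f' m).
    move=> m; have [M HM] := HN0 (m + N0) (leq_addl _ _).
    exact: (marking_good HBP HM).1.
  have [g' [Hg1 Hg2]] := assemble (main_good HBP Hch' Hg').
  exists (fun m => g' m + N0); split=> m; first by rewrite ltn_add2r.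
  exact: Hg2.
have H0 : exists N, forall i, N <= i -> exists i', i < i' /\ strong_cause X (f i) (f i').
  exists 0 => i _.
  have [m Hm] : exists m, i < m /\ ~ exists M, marking_of X (f m) M.
    apply: NNPP => H; apply: Hn; exists i.+1 => m im; apply: NNPP => nM.
    by apply: H; exists m.
  case: Hm => im nM; exists m; split=> //; split. exact (chain_lt Hch im).
  by move=> M M' HM; case: nM; exists M.
have [g [Hg1 Hg2]] := assemble H0.
by exists g.
Qed.
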